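(* Let $L$ be a distributive lattice and $\mathbf x,\mathbf y\in L^n$. Then $\mathbf x$ and $\mathbf y$ are g-comonotone if and only if they are dually g-comonotone.
   Context: $\mathbf x,\mathbf y\in L^n$ are g-comonotone if for every pair $i,j\in\{1,\dots,n\}$: $(x_i\vee y_i)\wedge(x_j\vee y_j)=(x_i\wedge x_j)\vee(y_i\wedge y_j)$. They are dually g-comonotone if for every pair $i,j$: $(x_i\wedge y_i)\vee(x_j\wedge y_j)=(x_i\vee x_j)\wedge(y_i\vee y_j)$. *)

(* Defs.v *)
From HB Require Import structures.
From mathcomp Require Import all_boot all_order.
Set Implicit Arguments. Unset Strict Implicit. Unset Printing Implicit Defensive.
Import Order.LTheory.
Local Open Scope order_scope.

Definition g_comonotone (d : Order.disp_t) (L : latticeType d) (n : nat)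
  (x y : 'I_n -> L) : Prop :=
  forall i j : 'I_n,
    ((x i `|` y i) `&` (x j `|` y j)) = ((x i `&` x j) `|` (y i `&` y j)).

Definition dually_g_comonotone (d : Order.disp_t) (L : latticeType d) (n : nat)
  (x y : 'I_n -> L) : Prop :=
  forall i j : 'I_n,
    ((x i `&` y i) `|` (x j `&` y j)) = ((x i `|` x j) `&` (y i `|` y j)).

(* Main.v *)
Require Import Defs.
From HB Require Import structures.
From mathcomp Require Import all_boot all_order.
Import Order.LTheory.
Local Open Scope order_scope.

Section S.
Variables (d : Order.disp_t) (L : distrLatticeType d).
Implicit Types a b c e : L.

Lemma expand a b c e :
  (a `|` b) `&` (c `|` e) = ((a `&` c) `|` (b `&` e)) `|` ((a `&` e) `|` (b `&` c)).
Proof.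
rewrite meetUr !meetUl.
rewrite [LHS]joinACA [RHS]joinACA.
by rewrite [b `&` e `|` _]joinC.
Qed.

Lemma eq_le (Y Z : L) : (Y `|` Z = Y) <-> (Z <= Y).
Proof. by split => [<-|H]; [exact: leUr | apply/join_idPl]. Qed.

Ltac sm := match goal with
  | |- is_true (_ <= _ `&` _) => rewrite lexI; apply/andP; split; sm
  | _ => first [exact: lexx | (apply: leIxl; sm) | (apply: leIxr; sm)]
  end.

Lemma key a b c e :
  (a `&` e) `|` (b `&` c) <= (a `&` c) `|` (b `&` e) ->
  (a `&` e) `|` (b `&` c) <= (a `&` b) `|` (c `&` e).
Proof.
move=> H; rewrite leUx; apply/andP; split.
- have H1 : a `&` e <= (a `&` c) `|` (b `&` e) := le_trans (leUl _ _) H.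
  rewrite -(meet_idPl H1) meetUr leUx; apply/andP; split.
  + by apply: le_trans (leUr _ _); sm.
  + by apply: le_trans (leUl _ _); sm.
- have H1 : b `&` c <= (a `&` c) `|` (b `&` e) := le_trans (leUr _ _) H.
  rewrite -(meet_idPl H1) meetUr leUx; apply/andP; split.
  + by apply: le_trans (leUl _ _); sm.
  + by apply: le_trans (leUr _ _); sm.
Qed.

Lemma pair a b c e :
  (a `|` b) `&` (c `|` e) = (a `&` c) `|` (b `&` e) <->
  (a `&` b) `|` (c `&` e) = (a `|` c) `&` (b `|` e).
Proof.
rewrite expand [(a `|` c) `&` _]expand.
split => [/eq_le H|H].
  by apply/esym/eq_le; rewrite [c `&` b]meetC; apply: key.
have /eq_le H2 := esym H.
apply/eq_le; have := key a c b e H2; by rewrite [c `&` b]meetC.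
Qed.
End S.

Theorem theorem1 (d : Order.disp_t) (L : distrLatticeType d) (n : nat)
  (x y : 'I_n -> L) :
  g_comonotone x y <-> dually_g_comonotone x y.
Proof.
by split=> H i j; apply/pair; apply: H.
Qed.
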